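(* Let $X,Y$ be Banach spaces, let $F:X\rightrightarrows Y$ be a closed convex set-valued mapping, let $A\subset X$ be a closed convex set, let $\bar y\in Y$, put $S:=F^{-1}(\bar y)\cap A$, and let $\bar x\in S$. Suppose that the set $DF^{-1}(\bar y,\bar x)(B_Y)\cap(T(A,\bar x)+B_X)\cap B_X$ is relatively compact in $X$. Then ${\rm ssubreg}_AF(\bar x,\bar y)<+\infty$ if and only if $$DF^{-1}(\bar y,\bar x)(0)\cap T(A,\bar x)=\{0\}.$$
   Context: $B_X,B_Y$ are the closed unit balls; $B(x,\delta)$ is the open ball. $F$ closed convex means ${\rm gph}(F)=\{(x,y):y\in F(x)\}$ is closed and convex in $X\times Y$. For a closed convex set $C$ and $a\in C$, the contingent cone $T(C,a)$ is the set of $v$ for which there exist $v_n\to v$, $t_n\to0^+$ with $a+t_nv_n\in C$ for all $n$. For $(x,y)\in{\rm gph}(F)$, $DF^{-1}(y,x)(v):=\{u\in X:(u,v)\in T({\rm gph}(F),(x,y))\}$ and $DF^{-1}(y,x)(W)=\bigcup_{v\in W}DF^{-1}(y,x)(v)$ for $W\subset Y$. ${\rm ssubreg}_AF(\bar x,\bar y):=\inf\{\tau>0:\exists\delta>0$ such that $\|x-\bar x\|\le\tau(d(\bar y,F(x))+d(x,A))$ for all $x\in B(\bar x,\delta)\}$, with $\inf\emptyset=+\infty$. *)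

(* Defs.v *)
From HB Require Import structures.
From mathcomp Require Import all_boot all_order all_algebra.
From mathcomp Require Import all_classical all_reals all_analysis.
Unset Printing Implicit Defensive.
Import Order.TTheory GRing.Theory Num.Theory.
Import numFieldNormedType.Exports.
Local Open Scope classical_set_scope.
Local Open Scope ring_scope.

Definition convex_set_of {R : realType} {V : lmodType R} (C : set V) : Prop :=
  forall a b : V, forall t : R, C a -> C b -> 0 <= t -> t <= 1 ->
    C (t *: a + (1 - t) *: b).

Definition gph {X Y : Type} (F : X -> set Y) : set (X * Y) :=
  [set p | F p.1 p.2].

Definition inv_img {X Y : Type} (F : X -> set Y) (y : Y) : set X :=
  [set x | F x y].

Definition cball1 (R : realType) (V : normedModType R) : set V :=
  [set v | `|v| <= 1].

Definition contingent_cone {R : realType} {V : normedModType R}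
    (C : set V) (a : V) : set V :=
  [set v | exists (vn : nat -> V) (tn : nat -> R),
      vn @ \oo --> v /\ tn @ \oo --> (0 : R) /\ (forall n, 0 < tn n) /\
      (forall n, C (a + tn n *: vn n))].

Definition coderiv_inv {R : realType} {X Y : normedModType R}
    (F : X -> set Y) (y : Y) (x : X) (v : Y) : set X :=
  [set u | contingent_cone (gph F) (x, y) (u, v)].

Definition coderiv_inv_set {R : realType} {X Y : normedModType R}
    (F : X -> set Y) (y : Y) (x : X) (W : set Y) : set X :=
  [set u | exists2 v, W v & coderiv_inv F y x v u].

Definition minkowski_sum {R : realType} {V : normedModType R} (A B : set V) : set V :=
  [set z | exists a b, A a /\ B b /\ z = a + b].

(* distance d(z, C) in extended reals, +oo for empty C *)
Definition edist {R : realType} {V : normedModType R} (z : V) (C : set V) : \bar R :=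
  ereal_inf [set (`|z - c|)%:E | c in C].

(* ssubreg_A F (xb, yb) in \bar R, with inf of the empty set = +oo *)
Definition ssubreg {R : realType} {X Y : normedModType R}
    (F : X -> set Y) (A : set X) (xb : X) (yb : Y) : \bar R :=
  ereal_inf [set tau%:E | tau in
    [set tau : R | 0 < tau /\ exists2 delta : R, 0 < delta &
       forall x : X, `|x - xb| < delta ->
         ((`|x - xb|)%:E <= tau%:E * (edist yb (F x) + edist x A))%E]].

(* Main.v *)
From Pilot Require Import Defs.
From HB Require Import structures.
From mathcomp Require Import all_boot all_order all_algebra.
From mathcomp Require Import all_classical all_reals all_analysis.
From mathcomp Require Import lra.
Import Order.TTheory GRing.Theory Num.Theory.
Import numFieldNormedType.Exports.
Local Open Scope classical_set_scope.
Local Open Scope ring_scope.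

Section Helpers.
Context {R : realType} {V : normedModType R}.

Definition Teps (C : set V) (a v : V) : Prop :=
  forall e : R, 0 < e -> exists t : R, exists w : V,
    [/\ 0 < t, t < e, `|w - v| < e & C (a + t *: w)].

Lemma T_Teps (C : set V) a v : contingent_cone C a v -> Teps C a v.
Proof.
move=> [vn [tn [cv [ct [tpos hC]]]]] e e0.
have /cvgrPdist_lt /(_ e e0) h1 := cv.
have /cvgrPdist_lt /(_ e e0) h2 := ct.
have [n [hn1 hn2]] := filter_ex (filterI h1 h2).
exists (tn n), (vn n); split => //.
- by move: hn2; rewrite sub0r normrN gtr0_norm.
- by rewrite distrC.
Qed.

Lemma Teps_T (C : set V) a v : Teps C a v -> contingent_cone C a v.
Proof.
move=> h.
have: forall n : nat, exists p : R * V,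
    [/\ 0 < p.1, p.1 < n.+1%:R^-1, `|p.2 - v| < n.+1%:R^-1 & C (a + p.1 *: p.2)].
  move=> n; have hn : 0 < n.+1%:R^-1 :> R by rewrite invr_gt0 ltr0Sn.
  have [t [w [? ? ? ?]]] := h _ hn.
  by exists (t, w).
move/choice => [f hf].
exists (fun n => (f n).2), (fun n => (f n).1); split; [|split; [|split]].
- apply/cvgrPdist_lt => e e0; near=> n.
  have [_ _ h3 _] := hf n; rewrite distrC; apply: lt_trans h3 _.
  near: n; exact: (near_infty_natSinv_lt (PosNum e0)).
- apply/cvgrPdist_lt => e e0; near=> n.
  have [h0 h2 _ _] := hf n; rewrite sub0r normrN gtr0_norm //; apply: lt_trans h2 _.
  near: n; exact: (near_infty_natSinv_lt (PosNum e0)).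
- by move=> n; have [] := hf n.
- by move=> n; have [] := hf n.
Unshelve. all: by end_near.
Qed.

Lemma Teps_closed (C : set V) a v :
  (forall e : R, 0 < e -> exists w, Teps C a w /\ `|w - v| < e) -> Teps C a v.
Proof.
move=> h e e0.
have e20 : 0 < e / 2 by rewrite divr_gt0.
have [w [hw hwv]] := h _ e20.
have [t [w' [t0 te hw' Cw']]] := hw _ e20.
exists t, w'; split => //.
- by apply: lt_trans te _; rewrite ltr_pdivrMr // ltr_pMr // ltr1n.
- have -> : w' - v = (w' - w) + (w - v) by rewrite addrA subrK.
  apply: le_lt_trans (ler_normD _ _) _.
  by rewrite (splitr e) ltrD.
Qed.

Lemma cvx_id (l : R) (a x : V) : l *: (a + x) + (1 - l) *: a = a + l *: x.
Proof.
by rewrite scalerDr scalerBl scale1r addrC addrA subrK addrC.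
Qed.

Lemma convex_shrink (C : set V) a w t1 t :
  convex_set_of C -> C a -> C (a + t1 *: w) -> 0 < t -> t <= t1 -> C (a + t *: w).
Proof.
move=> cvx Ca Cw t0 tt1.
have t10 : 0 < t1 by apply: lt_le_trans tt1.
have := cvx _ _ (t / t1) Cw Ca.
rewrite cvx_id scalerA mulrVK ?unitfE ?gt_eqF //; apply.
  by rewrite divr_ge0 // ltW.
by rewrite ler_pdivrMr // mul1r.
Qed.

Lemma convex_cone (C : set V) a c s :
  convex_set_of C -> C a -> C c -> 0 < s -> Teps C a (s *: (c - a)).
Proof.
move=> cvx Ca Cc s0 e e0.
pose t := Num.min (e / 2) s^-1.
have t0 : 0 < t by rewrite lt_min divr_gt0 // invr_gt0.
have te : t < e.
  have : t <= e / 2 by rewrite ge_min lexx.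
  move/le_lt_trans; apply.
  by rewrite ltr_pdivrMr // ltr_pMr // ltr1n.
exists t, (s *: (c - a)); split => //; first by rewrite subrr normr0.
have ts1 : t * s <= 1.
  have : t <= s^-1 by rewrite ge_min lexx orbT.
  by move=> h; rewrite -[1](mulVf (lt0r_neq0 s0)) ler_pM2r.
have := cvx _ _ (t * s) Cc Ca (mulr_ge0 (ltW t0) (ltW s0)) ts1.
have -> : (t * s) *: c + (1 - t * s) *: a = a + t *: (s *: (c - a)).
  by rewrite scalerA -(cvx_id (t * s) a (c - a)) [a + (c - a)]addrC subrK.
by [].
Qed.

Lemma zero_in_T (C : set V) a : C a -> contingent_cone C a 0.
Proof.
move=> Ca; apply: Teps_T => e e0; exists (e / 2), 0; split.
- by rewrite divr_gt0.
- by rewrite ltr_pdivrMr // ltr_pMr // ltr1n.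
- by rewrite subrr normr0.
- by rewrite scaler0 addr0.
Qed.

Lemma edist_ge0 (z : V) (C : set V) : (0 <= Pilot.Defs.edist z C)%E.
Proof. by apply/ereal_infP => y [c _ <-]; rewrite lee_fin. Qed.

Lemma edist_le (z c : V) (C : set V) : C c -> (Pilot.Defs.edist z C <= (`|z - c|)%:E)%E.
Proof. by move=> Cc; apply: ereal_inf_lbound; exists c. Qed.

End Helpers.

Theorem proposition3p2 (R : realType) (X Y : completeNormedModType R)
    (F : X -> set Y) (A : set X) (yb : Y) (xb : X) :
  closed (gph F) -> convex_set_of (gph F) ->
  closed A -> convex_set_of A ->
  (inv_img F yb `&` A) xb ->
  compact (closure (coderiv_inv_set F yb xb (cball1 R Y)
             `&` minkowski_sum (contingent_cone A xb) (cball1 R X) `&` cball1 R X)) ->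
  ((ssubreg F A xb yb < +oo)%E <->
   coderiv_inv F yb xb 0 `&` contingent_cone A xb = [set 0]).
Proof.
move=> _ cvxF _ cvxA [Fxb Axb] hK; split.
- move=> /ereal_inf_lt [_ [tau [tau0 [del del0 hP]] <-] _].
  apply/seteqP; split => u; last first.
    move=> ->; split; last exact: zero_in_T.
    exact: (@zero_in_T R _ (gph F) (xb, yb)).
  move=> [hu1 hu2] /=.
  apply/eqP; rewrite -normr_eq0; apply/negP => /negP hn0.
  have u0 : 0 < `|u| by rewrite lt_neqAle eq_sym hn0 normr_ge0.
  pose C0 := 3 * tau + 1.
  have C00 : 0 < C0 by rewrite /C0; lra.
  have ud0 : 0 < `|u| + 1 by lra.
  pose e := Num.min (Num.min 1 (del / (`|u| + 1))) (`|u| / (2 * C0)).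
  have e0 : 0 < e.
    by rewrite !lt_min ltr01 !divr_gt0 // mulr_gt0.
  have e1 : e <= 1 by rewrite !ge_min lexx.
  have ed : e * (`|u| + 1) <= del.
    have : e <= del / (`|u| + 1) by rewrite !ge_min lexx orbT.
    by rewrite ler_pdivlMr.
  have eu : e * (2 * C0) <= `|u|.
    have : e <= `|u| / (2 * C0) by rewrite !ge_min lexx orbT.
    by rewrite ler_pdivlMr // mulr_gt0.
  have [t1 [[w z] [t10 t1e hwz hg]]] := T_Teps _ _ _ hu1 _ e0.
  move: hwz; rewrite prod_normE /= gt_max => /andP[hwu]; rewrite subr0 => hz.
  have [t2 [w' [t20 t2e hw' hA]]] := T_Teps _ _ _ hu2 _ e0.
  pose t := Num.min t1 t2.
  have t0 : 0 < t by rewrite lt_min t10 t20.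
  have tt1 : t <= t1 by rewrite ge_min lexx.
  have tt2 : t <= t2 by rewrite ge_min lexx orbT.
  have te : t < e by apply: le_lt_trans tt1 t1e.
  have hg' := convex_shrink _ _ _ _ _ cvxF (Fxb : gph F (xb, yb)) hg t0 tt1.
  have hA' := convex_shrink _ _ _ _ _ cvxA Axb hA t0 tt2.
  pose x := xb + t *: w.
  have hx : `|x - xb| = t * `|w|.
    by rewrite /x addrAC subrr add0r normrZ gtr0_norm.
  have hw : `|w| <= `|w - u| + `|u|.
    by rewrite -[X in `|X|](subrK u w) ler_normD.
  have hxd : `|x - xb| < del.
    rewrite hx; apply: lt_le_trans ed.
    have : `|w| < `|u| + 1 by lra.
    have := normr_ge0 w; nra.
  have := hP x hxd.
  have E1 := edist_le yb _ _ hg'.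
  have E2 := edist_le x _ _ hA'.
  move: E1 E2 => /= E1 E2 hP'.
  have h1 : `|yb - (yb + t *: z)| = t * `|z|.
    by rewrite opprD addrA subrr add0r normrN normrZ gtr0_norm.
  have h2 : `|x - (xb + t *: w')| = t * `|w - w'|.
    by rewrite /x opprD addrACA subrr add0r -scalerBr normrZ gtr0_norm.
  have := le_trans hP' (lee_wpmul2l (ltW tau0 : (0 <= tau%:E)%E) (leeD E1 E2)).
  rewrite h1 h2 hx -EFinD -EFinM lee_fin => H.
  have hww : `|w - w'| < 2 * e.
    have : `|w - w'| <= `|w - u| + `|u - w'|.
      have -> : w - w' = (w - u) + (u - w') by rewrite addrA subrK.
      exact: ler_normD.
    rewrite (distrC u); lra.
  have hw3 : `|w| <= 3 * tau * e.
    rewrite -(ler_pM2l t0); apply: le_trans H _.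
    have := mulr_gt0 tau0 t0; nra.
  have hu : `|u| <= `|u - w| + `|w|.
    by rewrite -{1}(subrK w u) ler_normD.
  rewrite distrC in hu; rewrite /C0 in eu; nra.
- move=> hI.
  have [tau [tau0 hd]] : exists tau : R, 0 < tau /\ exists2 delta : R, 0 < delta &
      forall x : X, `|x - xb| < delta ->
        ((`|x - xb|)%:E <= tau%:E * (Pilot.Defs.edist yb (F x) + Pilot.Defs.edist x A))%E.
    2: by apply: (@le_lt_trans _ _ tau%:E); [apply: ereal_inf_lbound; exists tau | exact: ltey].
  apply: contrapT => Hno.
  have key : forall k : nat, exists x : X, ~ ((`|x - xb|)%:E <=
      (k.+1%:R)%:E * (Pilot.Defs.edist yb (F x) + Pilot.Defs.edist x A))%E.
    move=> k; apply: contrapT => hk; apply: Hno; exists k.+1%:R; split => //.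
    exists 1 => // x _; apply: contrapT => hx; apply: hk; by exists x.
  have ustep : forall k : nat, exists u : X, [/\ `|u| = 1,
      exists v : Y, `|v| < k.+1%:R^-1 /\ contingent_cone (gph F) (xb, yb) (u, v) &
      exists w, contingent_cone A xb w /\ `|u - w| < k.+1%:R^-1].
    move=> k; have [x hx] := key k.
    move: hx; set tau := k.+1%:R; move=> hx.
    have tau0 : 0 < tau :> R by rewrite ltr0Sn.
    set dF := Pilot.Defs.edist yb (F x) in hx.
    set dA := Pilot.Defs.edist x A in hx.
    have dF0 : (0 <= dF)%E by apply: edist_ge0.
    have dA0 : (0 <= dA)%E by apply: edist_ge0.
    set r := `|x - xb| in hx.
    have r0 : 0 < r.
      rewrite lt_neqAle normr_ge0 andbT; apply/negP => /eqP r0'; apply: hx.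
      by rewrite -r0' mule_ge0 ?lee_fin ?(ltW tau0) // adde_ge0.
    have rtau : r%:E = (tau%:E * (r / tau)%:E)%E.
      by rewrite -EFinM mulrC divfK // lt0r_neq0.
    have hF : (dF < (r / tau)%:E)%E.
      rewrite ltNge; apply/negP => h; apply: hx; rewrite rtau.
      apply: le_trans (lee_wpmul2l _ h) _; first by rewrite lee_fin ltW.
      by apply: lee_wpmul2l; [rewrite lee_fin ltW | apply: leeDl].
    have hA : (dA < (r / tau)%:E)%E.
      rewrite ltNge; apply/negP => h; apply: hx; rewrite rtau.
      apply: le_trans (lee_wpmul2l _ h) _; first by rewrite lee_fin ltW.
      by apply: lee_wpmul2l; [rewrite lee_fin ltW | apply: leeDr].
    have [_ [c Fc <-] hc] := ereal_inf_lt hF.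
    have [_ [a Aa <-] ha] := ereal_inf_lt hA.
    rewrite lte_fin in hc; rewrite lte_fin in ha.
    have ri0 : 0 < r^-1 by rewrite invr_gt0.
    have key2 : forall z : R, z < r / tau -> r^-1 * z < tau^-1.
      move=> z hz; rewrite -(ltr_pM2l r0) mulrA mulfV ?lt0r_neq0 // mul1r.
      by [].  
    exists (r^-1 *: (x - xb)); split.
    - by rewrite normrZ gtr0_norm // mulVf // lt0r_neq0.
    - exists (r^-1 *: (c - yb)); split.
        by rewrite normrZ gtr0_norm // distrC key2.
      apply: Teps_T.
      exact: (convex_cone (gph F) (xb, yb) (x, c) r^-1 cvxF Fxb Fc ri0).
    - exists (r^-1 *: (a - xb)); split.
        by apply: Teps_T; apply: convex_cone.
      rewrite -scalerBr opprB addrA subrK normrZ gtr0_norm //.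
      by apply: key2.
  have [uf huf] := choice ustep.
  have inv1 : forall k : nat, k.+1%:R^-1 <= 1 :> R.
    by move=> k; rewrite invf_le1 ?ltr0Sn // ler1n.
  move: hK; set K := closure _ => hK.
  have hKF : (uf @ \oo) K.
    exists 0%N => // n _ /=; apply: subset_closure.
    have [hn1 [v [hv hT]] [w [hw hwu]]] := huf n.
    split; [split|].
    - exists v; last exact: hT.
      by rewrite /cball1 /=; apply: ltW; apply: lt_le_trans hv _.
    - exists w, (uf n - w); split => //; split; last by rewrite addrC subrK.
      by rewrite /cball1 /=; apply: ltW; apply: lt_le_trans hwu _.
    - by rewrite /cball1 /= hn1.
  have [p [Kp clp]] := hK (uf @ \oo) (fmap_proper_filter uf _) hKF.
  have close : forall e : R, 0 < e -> forall N : nat,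
      exists k, (N <= k)%N /\ `|uf k - p| < e.
    move=> e e0 N.
    have hS : (uf @ \oo) [set y | exists k, (N <= k)%N /\ y = uf k].
      by exists N => // n /= hn; exists n.
    have := clp _ _ hS (nbhsx_ballx _ _ e0).
    move=> [_ [[k [hk ->]] hb]]; exists k; split => //.
    by move: hb; rewrite -ball_normE /ball_ /= distrC.
  have pn0 : p != 0.
    apply/eqP => p0.
    have h12 : 0 < 1 / 2 :> R by rewrite divr_gt0 // ltr0n.
    have [k [_ hk]] := close (1 / 2) h12 0%N.
    have [hn1 _ _] := huf k.
    move: hk; rewrite p0 subr0 hn1; lra.
  have hpT : contingent_cone (gph F) (xb, yb) (p, 0).
    apply: Teps_T; apply: Teps_closed => e e0.
    have [N _ hN] := near_infty_natSinv_lt (PosNum e0).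
    have [k [hk hpk]] := close e e0 N.
    have [_ [v [hv hT]] _] := huf k.
    exists (uf k, v); split; first exact: T_Teps.
    rewrite prod_normE /= gt_max hpk /= subr0.
    by apply: lt_trans hv _; apply: hN.
  have hpA : contingent_cone A xb p.
    apply: Teps_T; apply: Teps_closed => e e0.
    have e20 : 0 < e / 2 by rewrite divr_gt0.
    have [N _ hN] := near_infty_natSinv_lt (PosNum e20).
    have [k [hk hpk]] := close _ e20 N.
    have [_ _ [w [hw hwu]]] := huf k.
    exists w; split; first exact: T_Teps.
    have -> : w - p = (w - uf k) + (uf k - p) by rewrite addrA subrK.
    apply: le_lt_trans (ler_normD _ _) _.
    rewrite (splitr e) ltrD // distrC; apply: lt_trans hwu _; exact: hN.
  have : (coderiv_inv F yb xb 0 `&` contingent_cone A xb) p by split.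
  by rewrite hI => /= p0; rewrite p0 eqxx in pn0.
Qed.
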